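(* Let $p(a,b\mid x_0,x_1,y,y')$ be a non-signalling racbox. Then for every choice of inputs $x_0,x_1,y,y'\in\{0,1\}$, with probability one the outputs satisfy $$b = x_y\oplus a\oplus y' .$$ Equivalently, whenever $a\neq y'$ the box outputs $b = x_y\oplus 1$ with certainty (it acts as an ''anti-RAC'').
   Context: A box is a family of conditional probability distributions $p(a,b\mid x_0,x_1,y,y')$ with $a,b,x_0,x_1,y,y'\in\{0,1\}$. Alice holds inputs $x_0,x_1$ and output $a$; Bob holds inputs $y,y'$ and output $b$. A racbox is a box with two properties. First, it is non-signalling from Bob to Alice: $p(a\mid x_0,x_1,y,y')=\sum_b p(a,b\mid x_0,x_1,y,y')$ does not depend on $(y,y')$. Second, whenever $a=y'$ one has $b=x_y$, i.e. $p(a,b\mid x_0,x_1,y,y')=0$ whenever $a=y'$ and $b\neq x_y$. A racbox is non-signalling if, in addition, Bob's marginal $p(b\mid x_0,x_1,y,y')=\sum_a p(a,b\mid x_0,x_1,y,y')$ does not depend on $(x_0,x_1)$. *)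

(* Defs.v *)
From Stdlib Require Import Reals Bool.
Open Scope R_scope.

(* A box: p a b x0 x1 y y' = p(a,b | x0,x1,y,y'), all variables in {0,1} = bool. *)
Definition box := bool -> bool -> bool -> bool -> bool -> bool -> R.

Definition is_box (p : box) : Prop :=
  (forall a b x0 x1 y y', 0 <= p a b x0 x1 y y') /\
  (forall x0 x1 y y',
     p false false x0 x1 y y' + p false true x0 x1 y y'
     + p true false x0 x1 y y' + p true true x0 x1 y y' = 1).

Definition xsel (x0 x1 y : bool) : bool := if y then x1 else x0.

Definition margA (p : box) a x0 x1 y y' : R :=
  p a false x0 x1 y y' + p a true x0 x1 y y'.
Definition margB (p : box) b x0 x1 y y' : R :=
  p false b x0 x1 y y' + p true b x0 x1 y y'.

Definition racbox (p : box) : Prop :=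
  is_box p /\
  (forall a x0 x1 y y' z z', margA p a x0 x1 y y' = margA p a x0 x1 z z') /\
  (forall a b x0 x1 y y', a = y' -> b <> xsel x0 x1 y -> p a b x0 x1 y y' = 0).

Definition ns_racbox (p : box) : Prop :=
  racbox p /\
  (forall b x0 x1 w0 w1 y y', margB p b x0 x1 y y' = margB p b w0 w1 y y').

(* Main.v *)
Require Import Defs.
From Stdlib Require Import Reals Bool Lra.
Open Scope R_scope.

Theorem lemma1 (p : box) (Hp : ns_racbox p) :
  forall x0 x1 y y' a b,
    b <> xorb (xorb (xsel x0 x1 y) a) y' -> p a b x0 x1 y y' = 0.
Proof.
  destruct Hp as [[[Hn Hs] [HA HZ]] HB].
  intros x0 x1 y y' a b Hb.
  set (w0 := if y then x0 else negb x0).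
  set (w1 := if y then negb x1 else x1).
  pose proof (Hs x0 x1 y false). pose proof (Hs x0 x1 y true).
  pose proof (Hs w0 w1 y false). pose proof (Hs w0 w1 y true).
  pose proof (HB false x0 x1 w0 w1 y false). pose proof (HB false x0 x1 w0 w1 y true).
  pose proof (HB true x0 x1 w0 w1 y false). pose proof (HB true x0 x1 w0 w1 y true).
  pose proof (HA false x0 x1 y false y true). pose proof (HA true x0 x1 y false y true).
  pose proof (HA false w0 w1 y false y true). pose proof (HA true w0 w1 y false y true).
  pose proof (HZ false true x0 x1 y false). pose proof (HZ false false x0 x1 y false).
  pose proof (HZ true true x0 x1 y true). pose proof (HZ true false x0 x1 y true).
  pose proof (HZ false true w0 w1 y false). pose proof (HZ false false w0 w1 y false).
  pose proof (HZ true true w0 w1 y true). pose proof (HZ true false w0 w1 y true).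
  assert (N := fun a b x0 x1 y => Hn a b x0 x1 y).
  unfold margA, margB in *.
  subst w0 w1.
  destruct x0, x1, y, y', a, b; simpl in *;
  repeat match goal with
  | H : ?u = ?u -> ?v <> ?w -> _ |- _ =>
      first [ specialize (H eq_refl ltac:(discriminate)) | clear H ]
  | H : ?u = ?v -> _ |- _ => clear H
  end;
  try (exfalso; apply Hb; reflexivity);
  repeat match goal with |- context [p ?a ?b ?c ?d ?e ?f] =>
    match goal with H : 0 <= p a b c d e f |- _ => fail 1 | _ =>
    pose proof (Hn a b c d e f) end end;
  try (match goal with |- context [p _ _ ?c ?d ?e _] =>
   pose proof (Hn false false c d e false); pose proof (Hn false true c d e false);
   pose proof (Hn true false c d e false); pose proof (Hn true true c d e false);
   pose proof (Hn false false c d e true); pose proof (Hn false true c d e true);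
   pose proof (Hn true false c d e true); pose proof (Hn true true c d e true);
   pose proof (Hn false false (negb c) d e false); pose proof (Hn false true (negb c) d e false);
   pose proof (Hn true false (negb c) d e false); pose proof (Hn true true (negb c) d e false);
   pose proof (Hn false false (negb c) d e true); pose proof (Hn false true (negb c) d e true);
   pose proof (Hn true false (negb c) d e true); pose proof (Hn true true (negb c) d e true);
   pose proof (Hn false false c (negb d) e false); pose proof (Hn false true c (negb d) e false);
   pose proof (Hn true false c (negb d) e false); pose proof (Hn true true c (negb d) e false);
   pose proof (Hn false false c (negb d) e true); pose proof (Hn false true c (negb d) e true);
   pose proof (Hn true false c (negb d) e true); pose proof (Hn true true c (negb d) e true)
  end; simpl in *; lra).
Qed.
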